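(* Let $G$ be a compact connected Lie group with identity $e$. Let $N=(N(t))_{t\ge0}$ be a Poisson process with parameter $\lambda>0$, let $(X_n)_{n\ge1}$ be i.i.d. $G$-valued random variables, with the family $(X_n)_{n\ge1}$ independent of $N$, set $X_0=e$, and define the left compound Poisson process $Y(t)=\prod_{n=0}^{N(t)}X_n$ (product ordered from left to right). Then for every $t\ge0$: (1) if $X_1$ is inverse invariant then $Y(t)$ is inverse invariant; (2) if $X_1$ is conjugate invariant then $Y(t)$ is conjugate invariant.
   Context: A $G$-valued random variable $X$ is inverse invariant if $X\stackrel{d}{=}X^{-1}$, and conjugate invariant if $X\stackrel{d}{=}kXk^{-1}$ for all $k\in G$, where $\stackrel{d}{=}$ denotes equality in distribution. *)

(* Defs.v *)
From HB Require Import structures.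
From mathcomp Require Import all_boot all_order all_algebra.
From mathcomp Require Import all_classical all_reals all_analysis.
From mathcomp Require Import poisson_distribution.

Set Implicit Arguments.
Unset Strict Implicit.
Unset Printing Implicit Defensive.

Import Order.TTheory GRing.Theory Num.Theory.
Local Open Scope classical_set_scope.
Local Open Scope ring_scope.

Definition borel_of (G : ptopologicalType) := g_sigma_algebraType (@open G).

Section Defs.
Context {R : realType} {d : measure_display} {T : measurableType d}.
Variable P : probability T R.

Definition eq_distr {d'} {S : measurableType d'} (U V : T -> S) : Prop :=
  forall B : set S, measurable B -> P (U @^-1` B) = P (V @^-1` B).

Definition sigma_of {d'} {S : measurableType d'} (U : T -> S) : set (set T) :=
  preimage_set_system setT U measurable.

Definition mutually_independent_pos {d'} {S : measurableType d'}
    (U : nat -> T -> S) : Prop :=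
  forall (s : seq nat) (A : nat -> set T),
    uniq s -> all (fun n => 0 < n)%N s ->
    (forall n, n \in s -> sigma_of (U n) (A n)) ->
    P (\bigcap_(n in [set n | n \in s]) A n) = (\prod_(n <- s) P (A n))%E.

Definition independent_families {d'} {S : measurableType d'}
    (U : nat -> T -> S) (N : R -> T -> nat) : Prop :=
  forall A B : set T,
    <<s \bigcup_(n in [set n | (0 < n)%N]) sigma_of (U n) >> A ->
    <<s \bigcup_(t in [set t | 0 <= t]) sigma_of (N t) >> B ->
    P (A `&` B) = (P A * P B)%E.

Definition poisson_process (lambda : R) (N : R -> T -> nat) : Prop :=
  [/\ (forall t, 0 <= t -> measurable_fun setT (N t)),
      (forall w, N 0 w = 0%N),
      (forall w s t, 0 <= s -> s <= t -> (N s w <= N t w)%N),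
      (forall (n : nat) (tt : nat -> R) (C : nat -> set nat),
          0 <= tt 0%N -> (forall i, (i < n)%N -> tt i < tt i.+1) ->
          P (\bigcap_(i in [set i | (i < n)%N])
                [set w | C i (N (tt i.+1) w - N (tt i) w)%N]) =
          (\prod_(i < n) P [set w | C i (N (tt i.+1) w - N (tt i) w)%N])%E) &
      (forall s t (k : nat), 0 <= s -> s < t ->
          P [set w | (N t w - N s w)%N = k] = (poisson_pmf (lambda * (t - s)) k)%:E)].

End Defs.

Fixpoint cprod {T G : Type} (mul : G -> G -> G) (e : G) (X : nat -> T -> G)
    (n : nat) (w : T) : G :=
  match n with
  | 0%N => e
  | k.+1 => mul (cprod mul e X k w) (X k.+1 w)
  end.

Definition compound_poisson {R : Type} {T G : Type} (mul : G -> G -> G) (e : G)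
    (X : nat -> T -> G) (N : R -> T -> nat) (t : R) (w : T) : G :=
  cprod mul e X (N t w) w.

(* Main.v *)
Require Import Defs.
From HB Require Import structures.
From mathcomp Require Import all_boot all_order all_algebra.
From mathcomp Require Import all_classical all_reals all_analysis.
From mathcomp Require Import zify.
Import Order.TTheory GRing.Theory Num.Theory.
Local Open Scope classical_set_scope.
Local Open Scope ring_scope.
Section pf.
Local Open Scope ereal_scope.
Context {d1 d2 : measure_display} {T1 : measurableType d1} {T2 : measurableType d2}
  {R : realType} (m : {measure set T1 -> \bar R}) (f : T1 -> T2)
  (mf : measurable_fun [set: T1] f).
Definition pfw of measurable_fun [set: T1] f := fun A : set T2 => m (f @^-1` A).
Local Notation pf := (pfw mf).
Let pf0 : pf set0 = 0.
Proof. by rewrite /pf preimage_set0 measure0. Qed.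
Let pf_ge0 A : 0 <= pf A.
Proof. exact: measure_ge0. Qed.
Let pf_sa : semi_sigma_additive pf.
Proof.
move=> F mF tF mUF; rewrite /pf preimage_bigcup.
apply: measure_semi_sigma_additive.
- by move=> n; rewrite -[X in measurable X]setTI; exact: mf.
- apply/trivIsetP => /= i j _ _ ij; rewrite -preimage_setI.
  by move/trivIsetP : tF => /(_ _ _ _ _ ij) ->//; rewrite preimage_set0.
- by rewrite -preimage_bigcup -[X in measurable X]setTI; exact: mf.
Qed.
HB.instance Definition _ := isMeasure.Build _ _ _ pf pf0 pf_ge0 pf_sa.
End pf.
Lemma rect_unique {R : realType} {d' : measure_display} {S : measurableType d'}
  (m1 m2 : {measure set (S * S)%type -> \bar R}) :
  (m1 setT < +oo)%E ->
  (forall A B, measurable A -> measurable B -> m1 (A `*` B) = m2 (A `*` B)) ->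
  forall C, measurable C -> m1 C = m2 C.
Proof.
move=> m1oo h C mC.
apply: (measure_unique [set A `*` B | A in @measurable _ S & B in @measurable _ S]
   (fun _ => setT)) => //.
- exact: measurable_prod_measurableType.
- move=> _ _ [A1 mA1 [B1 mB1 <-]] [A2 mA2 [B2 mB2 <-]].
  rewrite -setXI; exists (A1 `&` A2); first exact: measurableI.
  by exists (B1 `&` B2) => //; exact: measurableI.
- by move=> _; exists setT => //; exists setT => //; rewrite setXTT.
- by rewrite bigcup_const.
- by move=> _ [A mA [B mB <-]]; exact: h.
Qed.
Section core.
Context {R : realType} {d : measure_display} {T : measurableType d}.
Context (P : probability T R).
Context {d' : measure_display} {S : measurableType d'}.
Context (mul : S -> S -> S) (e : S).
Context (mul_meas : measurable_fun setT (fun p : S * S => mul p.1 p.2)).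

Local Notation cp := (cprod mul e).

Definition indepK (K : set T) (U : nat -> T -> S) :=
  forall (B : nat -> set S) (m M : nat), (0 < m)%N -> (forall i, measurable (B i)) ->
  P (K `&` \big[setI/setT]_(m <= i < M) (U i @^-1` B i)) =
  (P K * \prod_(m <= i < M) P (U i @^-1` B i))%E.

Lemma cp_meas (U : nat -> T -> S) : (forall i, (0 < i)%N -> measurable_fun setT (U i)) ->
  forall n, measurable_fun setT (cp U n).
Proof.
move=> mU; elim=> [|n IH] /=; first exact: measurable_cst.
exact: (measurableT_comp mul_meas (measurable_fun_pair IH (mU _ (ltn0Sn n)))).
Qed.

Lemma preim_meas (U : nat -> T -> S) (mU : forall i, (0 < i)%N -> measurable_fun setT (U i)) i B :
  (0 < i)%N -> measurable B -> measurable (U i @^-1` B).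
Proof. by move=> i0 mB; rewrite -[X in measurable X]setTI; exact: mU. Qed.

Lemma bigI_meas (U : nat -> T -> S) (mU : forall i, (0 < i)%N -> measurable_fun setT (U i)) B m M :
  (0 < m)%N -> (forall i, measurable (B i)) ->
  measurable (\big[setI/setT]_(m <= i < M) (U i @^-1` B i)).
Proof.
move=> m0 mB; rewrite big_nat_cond; apply: (big_ind (fun X => measurable X)) => //.
- exact: measurableI.
- move=> i /andP[/andP[mi _] _]; exact: (preim_meas _ mU i (B i) (leq_trans m0 mi) (mB i)).
  Qed.

Lemma main (U : nat -> T -> S)
  (mU : forall i, (0 < i)%N -> measurable_fun setT (U i))
  (iT : indepK setT U) :
  forall m M A B K, measurable K -> indepK K U ->
  (m < M)%N -> measurable A -> (forall i, measurable (B i)) ->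
  P (K `&` (cp U m @^-1` A) `&` \big[setI/setT]_(m.+1 <= i < M) (U i @^-1` B i)) =
  (P K * P (cp U m @^-1` A) * \prod_(m.+1 <= i < M) P (U i @^-1` B i))%E.
Proof.
elim=> [|m IH] M A B K mK iK ltmM mA mB.
  have [Ae|nAe] := pselect (A e).
    have -> : cp U 0 @^-1` A = setT by apply/seteqP; split=> // w.
    by rewrite setIT probability_setT mule1; exact: iK.
  have -> : cp U 0 @^-1` A = set0 by apply/seteqP; split=> // w.
  by rewrite setI0 set0I measure0 mule0 mul0e.
set F := \big[setI/setT]_(m.+2 <= i < M) (U i @^-1` B i).
have mF : measurable F by exact: bigI_meas.
have mKF : measurable (K `&` F) by exact: measurableI.
pose h := fun w => (cp U m w, U m.+1 w).
have mh : measurable_fun setT h.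
  exact: measurable_fun_pair (cp_meas _ mU m) (mU _ (ltn0Sn m)).
set c := (P K * \prod_(m.+2 <= i < M) P (U i @^-1` B i))%E.
have cfin : c \is a fin_num.
  rewrite fin_numM ?fin_num_measure// big_nat_cond; apply: prode_fin_num.
  move=> i /andP[/andP[mi _] _].
  by rewrite fin_num_measure//; apply: (preim_meas _ mU i _ (leq_trans (ltn0Sn _) mi) (mB i)).
have c0 : (0 <= fine c)%R.
  by apply: fine_ge0; rewrite mule_ge0 ?measure_ge0//; apply: prode_ge0.
pose m1 := pfw (mrestr P mKF) h mh.
pose m2 := mscale (NngNum c0) (pfw P h mh).
have Hrect A1 A2 : measurable A1 -> measurable A2 -> m1 (A1 `*` A2) = m2 (A1 `*` A2).
  move=> mA1 mA2.
  rewrite /m1 /m2 /mscale /pfw /mrestr /= fineK //.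
  have E1 : h @^-1` (A1 `*` A2) = cp U m @^-1` A1 `&` U m.+1 @^-1` A2 by [].
  rewrite E1.
  pose B' := fun i => if i == m.+1 then A2 else B i.
  have mB' i : measurable (B' i) by rewrite /B'; case: ifP.
  have := IH M A1 B' K mK iK (ltnW ltmM) mA1 mB'.
  rewrite (big_ltn (m:=m.+1) (n:=M)) // (big_ltn (m:=m.+1) (n:=M)) // /B' eqxx.
  rewrite (eq_big_nat _ _ (F2 := fun i => U i @^-1` B i)); last first.
    by move=> i /andP[mi _]; rewrite gtn_eqF.
  rewrite (eq_big_nat _ _ (F2 := fun i => P (U i @^-1` B i))); last first.
    by move=> i /andP[mi _]; rewrite gtn_eqF.
  rewrite -/F /mrestr.
  have -> : (cp U m @^-1` A1 `&` U m.+1 @^-1` A2) `&` (K `&` F) =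
    K `&` cp U m @^-1` A1 `&` (U m.+1 @^-1` A2 `&` F).
    by apply/seteqP; split=> w /=; tauto.
  move=> ->.
  pose B'' := fun i : nat => A2.
  have := IH m.+2 A1 B'' setT measurableT iT (leqnSn _) mA1 (fun _ => mA2).
  rewrite !big_nat1 setTI probability_setT mul1e /B'' => ->.
  by rewrite /c -!muleA; congr (_ * _)%E; rewrite muleA muleC.
have m1oo : (m1 setT < +oo)%E.
  by rewrite ltey_eq /m1 /pfw fin_num_measure // preimage_setT.
have mC : measurable ((fun p : S * S => mul p.1 p.2) @^-1` A).
  by rewrite -[X in measurable X]setTI; exact: mul_meas.
have E : P (h @^-1` ((fun p : S * S => mul p.1 p.2) @^-1` A) `&` (K `&` F)) =
   ((fine c)%:E * P (h @^-1` ((fun p : S * S => mul p.1 p.2) @^-1` A)))%E :=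
  rect_unique m1 m2 m1oo Hrect _ mC.
rewrite fineK // in E.
have -> : K `&` cp U m.+1 @^-1` A `&` F = h @^-1` ((fun p : S * S => mul p.1 p.2) @^-1` A) `&` (K `&` F).
  by apply/seteqP; split=> w /=; tauto.
rewrite E /c.
by rewrite -!muleA; congr (_ * _)%E; rewrite muleC.
Qed.

Lemma pair_prod (U : nat -> T -> S)
  (mU : forall i, (0 < i)%N -> measurable_fun setT (U i))
  (iT : indepK setT U) m A1 A2 : measurable A1 -> measurable A2 ->
  P (cp U m @^-1` A1 `&` U m.+1 @^-1` A2) =
  (P (cp U m @^-1` A1) * P (U m.+1 @^-1` A2))%E.
Proof.
move=> mA1 mA2.
have := main _ mU iT m m.+2 A1 (fun _ => A2) setT measurableT iT (leqnSn _) mA1 (fun _ => mA2).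
by rewrite !big_nat1 setTI probability_setT mul1e.
Qed.

Lemma law (U V : nat -> T -> S)
  (mU : forall i, (0 < i)%N -> measurable_fun setT (U i))
  (mV : forall i, (0 < i)%N -> measurable_fun setT (V i))
  (iU : indepK setT U) (iV : indepK setT V)
  (hUV : forall i A, (0 < i)%N -> measurable A -> P (U i @^-1` A) = P (V i @^-1` A)) :
  forall m A, measurable A -> P (cp U m @^-1` A) = P (cp V m @^-1` A).
Proof.
elim=> [//|m IH] A mA.
pose hU := fun w => (cp U m w, U m.+1 w).
have mhU : measurable_fun setT hU.
  exact: measurable_fun_pair (cp_meas _ mU m) (mU _ (ltn0Sn m)).
pose hV := fun w => (cp V m w, V m.+1 w).
have mhV : measurable_fun setT hV.
  exact: measurable_fun_pair (cp_meas _ mV m) (mV _ (ltn0Sn m)).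
pose m1 := pfw P hU mhU.
pose m2 := pfw P hV mhV.
have Hrect A1 A2 : measurable A1 -> measurable A2 -> m1 (A1 `*` A2) = m2 (A1 `*` A2).
  move=> mA1 mA2.
  change (P (cp U m @^-1` A1 `&` U m.+1 @^-1` A2) = P (cp V m @^-1` A1 `&` V m.+1 @^-1` A2)).
  by rewrite (pair_prod _ mU) // (pair_prod _ mV) // IH // hUV.
have m1oo : (m1 setT < +oo)%E.
  by rewrite ltey_eq /m1 /pfw fin_num_measure // preimage_setT.
have mC : measurable ((fun p : S * S => mul p.1 p.2) @^-1` A).
  by rewrite -[X in measurable X]setTI; exact: mul_meas.
exact: (rect_unique m1 m2 m1oo Hrect _ mC).
Qed.
End core.
Section concrete.
Context {R : realType} {d : measure_display} {T : measurableType d}.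
Context (P : probability T R).
Context {d' : measure_display} {S : measurableType d'}.
Context (X : nat -> T -> S) (X_meas : forall n, (0 < n)%N -> measurable_fun setT (X n)).
Context (X_indep : mutually_independent_pos P X).
Context (N : R -> T -> nat) (XN_indep : independent_families P X N).
Context (t : R) (t_ge0 : 0 <= t).

Lemma gen_sigma_bigI (GX : set (set T)) (E : nat -> set T) (s : seq nat) :
  (forall i, i \in s -> GX (E i)) ->
  <<s GX >> (\big[setI/setT]_(i <- s) E i).
Proof.
move=> hE; rewrite big_seq_cond.
apply: (big_ind (fun X => <<s GX >> X)).
- exact: (@measurableT _ (g_sigma_algebraType GX)).
- move=> A B hA hB; exact: (@measurableI _ (g_sigma_algebraType GX) A B hA hB).
- by move=> i /andP[si _]; apply: sub_sigma_algebra; exact: hE.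
Qed.

Section trans.
Context (sg : nat -> nat) (f : S -> S) (mf : measurable_fun setT f).
Context (sg_pos : forall i, (0 < i)%N -> (0 < sg i)%N).
Context (sg_inv : forall i, (0 < i)%N -> sg (sg i) = i).
Let W := fun i w => f (X (sg i) w).

Lemma W_meas i : (0 < i)%N -> measurable_fun setT (W i).
Proof. by move=> i0; rewrite /W; exact: (measurableT_comp mf (X_meas _ (sg_pos i i0))). Qed.

Lemma W_prod (B : nat -> set S) m M : (0 < m)%N -> (forall i, measurable (B i)) ->
  P (\big[setI/setT]_(m <= i < M) (W i @^-1` B i)) =
  (\prod_(m <= i < M) P (W i @^-1` B i))%E.
Proof.
move=> m0 mB.
pose s := map sg (index_iota m M).
have pos_iota i : i \in index_iota m M -> (0 < i)%N.
  by rewrite mem_index_iota => /andP[mi _]; exact: leq_trans m0 mi.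
have us : uniq s.
  rewrite map_inj_in_uniq ?iota_uniq // => i j /pos_iota i0 /pos_iota j0 eij.
  by rewrite -(sg_inv i i0) eij (sg_inv j j0).
have ps : all (fun n => (0 < n)%N) s.
  by apply/allP => j /mapP[i /pos_iota i0 ->]; exact: sg_pos.
pose A j := W (sg j) @^-1` B (sg j).
have sA : forall j, j \in s -> sigma_of (X j) (A j).
  move=> j /mapP[i /pos_iota i0 ->].
  exists (f @^-1` B (sg (sg i))).
    by rewrite -[X in measurable X]setTI; exact: mf.
  by rewrite setTI /A /W (sg_inv (sg i) (sg_pos i i0)).
have := X_indep s A us ps sA.
rewrite bigcap_seq /s !big_map.
have eqA i : i \in index_iota m M -> A (sg i) = W i @^-1` B i.
  by move=> /pos_iota i0; rewrite /A (sg_inv i i0).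
rewrite (eq_big_seq _ eqA) (eq_big_seq (fun i => P (W i @^-1` B i))) //.
by move=> i /eqA ->.
Qed.

Lemma W_indepT : indepK P setT W.
Proof.
move=> B m M m0 mB; rewrite setTI probability_setT mul1e; exact: W_prod.
Qed.

Lemma W_indepN n : indepK P [set w | N t w = n] W.
Proof.
move=> B m M m0 mB.
rewrite setIC XN_indep.
- by rewrite W_prod // muleC.
- apply: gen_sigma_bigI => i.
  rewrite mem_index_iota => /andP[mi _].
  have i0 : (0 < i)%N by exact: leq_trans m0 mi.
  exists (sg i); first exact: sg_pos.
  exists (f @^-1` B i); first by rewrite -[X in measurable X]setTI; exact: mf.
  by rewrite setTI.
- apply: sub_sigma_algebra; exists t => //.
  exists [set n]; first exact: I.
  by rewrite setTI.
Qed.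

Lemma W_marg (X_ident : forall n, (0 < n)%N -> eq_distr P (X n) (X 1%N))
  (hf : eq_distr P (X 1%N) (fun w => f (X 1%N w))) i A :
  (0 < i)%N -> measurable A -> P (X i @^-1` A) = P (W i @^-1` A).
Proof.
move=> i0 mA.
have mfA : measurable (f @^-1` A) by rewrite -[X in measurable X]setTI; exact: mf.
rewrite (X_ident i i0 A mA) (hf A mA).
change (P (X 1%N @^-1` (f @^-1` A)) = P (X (sg i) @^-1` (f @^-1` A))).
by rewrite (X_ident (sg i) (sg_pos i i0) _ mfA).
Qed.
End trans.

Context (Nt_meas : measurable_fun setT (N t)).

Lemma Nset_meas (n : nat) : measurable [set w | N t w = n].
Proof.
have h : measurable (N t @^-1` [set n]).
  by rewrite -[X in measurable X]setTI; apply: Nt_meas.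
exact: h.
Qed.

Lemma decomp (Z : T -> S) (g : nat -> T -> S)
  (mg : forall n, measurable_fun setT (g n))
  (hZ : forall w, Z w = g (N t w) w) B : measurable B ->
  P (Z @^-1` B) =
  (\sum_(i <oo | i \in setT) P ([set w | N t w = i] `&` g i @^-1` B))%E.
Proof.
move=> mB.
have -> : Z @^-1` B = \bigcup_(i in setT) ([set w | N t w = i] `&` g i @^-1` B).
  apply/seteqP; split=> w /=.
    by move=> Zw; exists (N t w) => //; split => //=; rewrite -hZ.
  by move=> [i _ [/= <- gw]]; rewrite hZ.
apply: measure_bigcup.
  move=> i _; apply: measurableI; first exact: Nset_meas.
  by rewrite -[X in measurable X]setTI; exact: mg.
apply/trivIsetP => i j _ _ ij; apply/seteqP; split => // w /= [[h1 _] [h2 _]].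
by move/eqP: ij; apply; rewrite -h1 -h2.
Qed.

Context (mul : S -> S -> S) (e : S).
Context (mul_meas : measurable_fun setT (fun p : S * S => mul p.1 p.2)).

Lemma final (X_ident : forall n, (0 < n)%N -> eq_distr P (X n) (X 1%N))
  (Z : T -> S) (sgs : nat -> nat -> nat) (f : S -> S) (mf : measurable_fun setT f)
  (sg_pos : forall n i, (0 < i)%N -> (0 < sgs n i)%N)
  (sg_inv : forall n i, (0 < i)%N -> sgs n (sgs n i) = i)
  (hf : eq_distr P (X 1%N) (fun w => f (X 1%N w)))
  (hZ : forall w, Z w = cprod mul e (fun i w' => f (X (sgs (N t w) i) w')) (N t w) w) :
  eq_distr P (compound_poisson mul e X N t) Z.
Proof.
move=> B mB.
have iTX : indepK P setT X :=
  W_indepT id id (@measurable_id _ _ _) (fun i h => h) (fun i _ => erefl).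
have iNX n : indepK P [set w | N t w = n] X :=
  W_indepN id id (@measurable_id _ _ _) (fun i h => h) (fun i _ => erefl) n.
rewrite (@decomp _ (fun n => cprod mul e X n) (fun n => cp_meas mul e mul_meas X X_meas n) (fun w => erefl) B mB).
rewrite (@decomp Z (fun n => cprod mul e (fun i w => f (X (sgs n i) w)) n) (fun n => cp_meas mul e mul_meas _ (W_meas (sgs n) f mf (sg_pos n)) n) hZ B mB).
apply: eq_eseriesr => n _.
have mK := Nset_meas n.
have := main P mul e mul_meas X X_meas iTX n n.+1 B (fun _ => setT) _ mK (iNX n) (ltnSn n) mB (fun _ => measurableT).
rewrite !big_geq // setIT mule1 => ->.
have := main P mul e mul_meas _ (W_meas (sgs n) f mf (sg_pos n)) (W_indepT (sgs n) f mf (sg_pos n) (sg_inv n)) n n.+1 B (fun _ => setT) _ mK (W_indepN (sgs n) f mf (sg_pos n) (sg_inv n) n) (ltnSn n) mB (fun _ => measurableT).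
rewrite !big_geq // setIT mule1 => ->.
congr (_ * _)%E.
apply: (law P mul e mul_meas X _ X_meas (W_meas (sgs n) f mf (sg_pos n)) iTX (W_indepT (sgs n) f mf (sg_pos n) (sg_inv n))) => //.
by move=> i A i0 mA; exact: (W_marg (sgs n) f mf (sg_pos n) X_ident hf).
Qed.
End concrete.

Section grp.
Context {T G : Type} (mul : G -> G -> G) (inv : G -> G) (e : G).
Context (mulA : forall x y z, mul x (mul y z) = mul (mul x y) z).
Context (mul1g : forall x, mul e x = x).
Context (mulVg : forall x, mul (inv x) x = e).

Lemma mulgV x : mul x (inv x) = e.
Proof.
have h : mul (inv (inv x)) (mul (inv x) (mul x (inv x))) = e.
  by rewrite (mulA (inv x)) mulVg mul1g mulVg.
by rewrite -[LHS]mul1g -[in LHS](mulVg (inv x)) -mulA.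
Qed.

Lemma mulg1 x : mul x e = x.
Proof. by rewrite -(mulVg x) mulA mulgV mul1g. Qed.

Lemma invgK x : inv (inv x) = x.
Proof. by rewrite -[inv (inv x)]mulg1 -(mulVg x) mulA mulVg mul1g. Qed.

Lemma inv_uniq a b : mul a b = e -> b = inv a.
Proof. by move=> h; rewrite -[b]mul1g -(mulVg a) -mulA h mulg1. Qed.

Lemma invMg x y : inv (mul x y) = mul (inv y) (inv x).
Proof.
symmetry; apply: inv_uniq.
by rewrite -mulA (mulA y) mulgV mul1g mulgV.
Qed.

Lemma inv1 : inv e = e.
Proof. by rewrite -[inv e]mul1g mulgV. Qed.

Definition sgn (n i : nat) : nat := if (0 < i <= n)%N then (n.+1 - i)%N else i.

Lemma inv_cprod (X : nat -> T -> G) n w :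
  inv (cprod mul e X n w) = cprod mul e (fun i w => inv (X (sgn n i) w)) n w.
Proof.
set W := fun i w => inv (X (sgn n i) w).
suff Q : forall j, (j <= n)%N -> cprod mul e X n w = mul (cprod mul e X (n - j) w) (inv (cprod mul e W j w)).
  by rewrite (Q n (leqnn n)) subnn /= mul1g invgK.
elim=> [|j IH] ljn.
  by rewrite subn0 /= inv1 mulg1.
have E : (n - j = (n - j.+1).+1)%N by lia.
have sgE : sgn n j.+1 = (n - j.+1).+1.
  by rewrite /sgn ljn /=; lia.
rewrite (IH (ltnW ljn)) E /= invMg invgK /W sgE mulA.
by [].
Qed.

Lemma conj_cprod (X : nat -> T -> G) k n w :
  mul (mul k (cprod mul e X n w)) (inv k) =
  cprod mul e (fun i w => mul (mul k (X i w)) (inv k)) n w.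
Proof.
elim: n => [|n IH] /=; first by rewrite mulg1 mulgV.
rewrite -IH -!mulA; congr (mul k _); congr (mul (cprod mul e X n w) _).
by rewrite (mulA (inv k) k) mulVg mul1g.
Qed.
End grp.

Theorem proposition4 (R : realType) (d : measure_display) (T : measurableType d)
  (P : probability T R)
  (G : ptopologicalType) (mul : G -> G -> G) (inv : G -> G) (e : G)
  (mulA : forall x y z, mul x (mul y z) = mul (mul x y) z)
  (mul1g : forall x, mul e x = x)
  (mulVg : forall x, mul (inv x) x = e)
  (G_hausdorff : hausdorff_space G)
  (G_compact : compact [set: G])
  (G_connected : connected [set: G])
  (mul_cont : continuous (fun p : G * G => mul p.1 p.2))
  (inv_cont : continuous inv)
  (mul_meas : measurable_fun setT
       (fun p : borel_of G * borel_of G => (mul p.1 p.2 : borel_of G)))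
  (inv_meas : measurable_fun setT (inv : borel_of G -> borel_of G))
  (lambda : R) (lambda_gt0 : 0 < lambda)
  (N : R -> T -> nat) (HN : poisson_process P lambda N)
  (X : nat -> T -> borel_of G)
  (X_meas : forall n, (0 < n)%N -> measurable_fun setT (X n))
  (X_indep : mutually_independent_pos P X)
  (X_ident : forall n, (0 < n)%N -> eq_distr P (X n) (X 1%N))
  (XN_indep : independent_families P X N)
  (t : R) (t_ge0 : 0 <= t) :
  let Y : T -> borel_of G := compound_poisson mul e X N t in
  (eq_distr P (X 1%N) (fun w => (inv (X 1%N w) : borel_of G)) ->
     eq_distr P Y (fun w => (inv (Y w) : borel_of G))) /\
  (forall k : G,
     eq_distr P (X 1%N) (fun w => (mul (mul k (X 1%N w)) (inv k) : borel_of G)) ->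
     eq_distr P Y (fun w => (mul (mul k (Y w)) (inv k) : borel_of G))).
Proof.
move=> Y; have [mN _ _ _ _] := HN.
have Nt_meas := mN t t_ge0.
split.
- move=> hinv.
  apply: (final P X X_meas X_indep N XN_indep t t_ge0 Nt_meas mul e mul_meas X_ident
     (fun w => inv (Y w)) sgn inv inv_meas) => //.
  + move=> n i i0; rewrite /sgn; case: ifP => h //; move/andP: h => [h1 h2]; lia.
  + move=> n i i0; rewrite /sgn.
    have [h|h] := boolP (0 < i <= n)%N.
      move/andP: h => [h1 h2].
      have -> : (0 < n.+1 - i <= n)%N by apply/andP; split; lia.
      lia.
    by rewrite (negbTE h).
  + by move=> w; rewrite /Y /compound_poisson (inv_cprod mul inv e mulA mul1g mulVg).
- move=> k hk.
  have mlk : measurable_fun setT (fun x : borel_of G => (mul k x : borel_of G)).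
    exact: (measurableT_comp mul_meas (measurable_fun_pair (@measurable_cst _ _ (borel_of G) (borel_of G) setT (k : borel_of G)) (@measurable_id _ (borel_of G) setT))).
  have mf : measurable_fun setT (fun x : borel_of G => (mul (mul k x) (inv k) : borel_of G)).
    exact: (measurableT_comp mul_meas (measurable_fun_pair mlk (@measurable_cst _ _ (borel_of G) (borel_of G) setT (inv k : borel_of G)))).
  apply: (final P X X_meas X_indep N XN_indep t t_ge0 Nt_meas mul e mul_meas X_ident
     (fun w => mul (mul k (Y w)) (inv k)) (fun _ i => i) _ mf) => //.
  by move=> w; rewrite /Y /compound_poisson (conj_cprod mul inv e mulA mul1g mulVg).
Qed.
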